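(* For every integer $k\ge 3$, $$F_v(J_k,J_k;k)\le\left\lceil\frac{5F_v(k-1,k-1;k)}{2}\right\rceil.$$
   Context: All graphs are finite and simple. $J_n$ denotes $K_n$ with one edge removed. An integer $a$ used in place of a graph denotes $K_a$. ''A graph $F$ contains $H$'' means $F$ has a (not necessarily induced) subgraph isomorphic to $H$. $G\rightarrow(H_1,H_2)^v$ means: for every partition $V(G)=X_1\cup X_2$ there is $i$ such that the subgraph induced by $X_i$ contains $H_i$. $F_v(H_1,H_2;k)$ is the minimum number of vertices of a $K_k$-free graph $G$ with $G\rightarrow(H_1,H_2)^v$. *)

(* Defs.v *)
From Stdlib Require Import ClassicalEpsilon.
From mathcomp Require Import all_boot.
Set Implicit Arguments. Unset Strict Implicit. Unset Printing Implicit Defensive.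

Definition is_graph n (e : rel 'I_n) : Prop := symmetric e /\ irreflexive e.

Definition Krel (a : nat) : rel 'I_a := fun i j => i != j.

Arguments Krel a : clear implicits.
Definition Jrel (a : nat) : rel 'I_a :=
  fun i j => (i != j) &&
    ~~ (((val i == 0) && (val j == 1)) || ((val i == 1) && (val j == 0))).

Arguments Jrel a : clear implicits.
Definition contains_in m (h : rel 'I_m) n (g : rel 'I_n) (X : {set 'I_n}) : Prop :=
  exists f : 'I_m -> 'I_n,
    injective f /\ (forall i, f i \in X) /\ (forall i j, h i j -> g (f i) (f j)).

Definition Kfree (k : nat) n (g : rel 'I_n) : Prop :=
  ~ contains_in (Krel k) g [set: 'I_n].

Definition varrows n (g : rel 'I_n) m1 (h1 : rel 'I_m1) m2 (h2 : rel 'I_m2) : Prop :=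
  forall X : {set 'I_n}, contains_in h1 g X \/ contains_in h2 g (~: X).

Definition Fv_good (k : nat) m1 (h1 : rel 'I_m1) m2 (h2 : rel 'I_m2) (n : nat) : Prop :=
  exists g : rel 'I_n, is_graph g /\ Kfree k g /\ varrows g h1 h2.

Definition Fv_goodb k m1 (h1 : rel 'I_m1) m2 (h2 : rel 'I_m2) : pred nat :=
  fun n => if excluded_middle_informative (Fv_good k h1 h2 n) then true else false.

(* F_v(H1,H2;k): the minimum such n (convention: 0 if no such graph exists). *)
Definition Fv (k : nat) m1 (h1 : rel 'I_m1) m2 (h2 : rel 'I_m2) : nat :=
  match excluded_middle_informative (exists n, Fv_goodb k h1 h2 n) with
  | left ex => ex_minn ex
  | right _ => 0
  end.

(* Main.v *)
Require Import Defs.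
From mathcomp Require Import all_boot zify.
From Stdlib Require Import Classical ClassicalEpsilon.

Set Implicit Arguments. Unset Strict Implicit. Unset Printing Implicit Defensive.

Lemma clique_inj a n (g : rel 'I_n) (f : 'I_a -> 'I_n) :
  irreflexive g -> (forall i j, i != j -> g (f i) (f j)) -> injective f.
Proof.
move=> irr cl i j E; apply/eqP; apply/negPn/negP => /cl.
by rewrite E irr.
Qed.

Lemma embedJ k2 n m (g : rel 'I_n) (h : rel 'I_m) (p : 'I_m -> 'I_n) (S : {set 'I_m})
  (f : 'I_k2.+1 -> 'I_n) (i0 : 'I_k2.+1) (x0 x1 : 'I_m) (sel : 'I_n -> 'I_m) :
  irreflexive g ->
  (forall x y, h x y = g (p x) (p y)) ->
  (forall i j, i != j -> g (f i) (f j)) ->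
  x0 != x1 -> p x0 = f i0 -> p x1 = f i0 -> x0 \in S -> x1 \in S ->
  (forall i, p (sel (f i)) = f i /\ sel (f i) \in S) ->
  contains_in (Jrel k2.+2) h S.
Proof.
move=> irr hE cl nx px0 px1 S0 S1 hsel.
pose c (j : nat) := if j <= 1 then val i0 else if j.-1 == val i0 then 0 else j.-1.
pose cl' (j : 'I_k2.+2) : 'I_k2.+1 := inord (c j).
have clv j : nat_of_ord (cl' j) = c j.
  rewrite /cl' inordK //; rewrite /c; have := ltn_ord i0; have := ltn_ord j.
  case: ifP => _; first by [].
  case: ifP => _ ; lia.
have cl01 (j : 'I_k2.+2) : val j <= 1 -> cl' j = i0.
  by move=> hj; apply: ord_inj; rewrite clv /c hj.
have clne (a b : 'I_k2.+2) : Jrel k2.+2 a b -> cl' a != cl' b.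
  rewrite /Jrel => /andP [ab nab]; apply/negP => /eqP /(congr1 (@nat_of_ord _)).
  rewrite !clv /c; move: ab nab; rewrite -val_eqE /=.
  have := ltn_ord i0; have := ltn_ord a; have := ltn_ord b.
  case: ifP => ha; case: ifP => hb; try case: ifP => hc; try case: ifP => hd;
    move/eqP: ha => ha; move/eqP: hb => hb; try move/eqP: hc; try move/eqP: hd; lia.
pose F (j : 'I_k2.+2) := if nat_of_ord j == 0 then x0 else if nat_of_ord j == 1 then x1 else sel (f (cl' j)).
have pF j : p (F j) = f (cl' j).
  rewrite /F; case: ifP => [/eqP h0|_]; first by have -> : cl' j = i0 by apply: cl01; rewrite /= h0.
  case: ifP => [/eqP h1|_]; first by have -> : cl' j = i0 by apply: cl01; rewrite /= h1.
  by case: (hsel (cl' j)).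
have fne (a b : 'I_k2.+2) : Jrel k2.+2 a b -> F a != F b.
  move=> /clne H; apply/negP => /eqP /(congr1 p); rewrite !pF => E.
  have := cl _ _ H; by rewrite E irr.
exists F; split; last split.
- move=> a b E; apply/eqP; apply/negPn/negP => nab.
  case J: (Jrel k2.+2 a b); first by move: (fne _ _ J); rewrite E eqxx.
  move: J; rewrite /Jrel nab /= => /negbFE /orP [] /andP [/eqP ha /eqP hb];
    move: E; rewrite /F ha hb /= => E; by move/eqP: nx; rewrite E.
- move=> j; rewrite /F; case: ifP => // _; case: ifP => // _; by case: (hsel (cl' j)).
- move=> a b J; rewrite hE !pF; exact: cl _ _ (clne _ _ J).
Qed.

Definition pr N (x : 'I_(N.+2 + N.+2).+1) : 'I_N.+2 :=
  inord (if x < N.+2 then (x : nat) else if x < N.+2 + N.+2 then x - N.+2 else N.+1).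
Definition cp0 N (v : 'I_N.+2) : 'I_(N.+2 + N.+2).+1 := inord v.
Definition cp1 N (v : 'I_N.+2) : 'I_(N.+2 + N.+2).+1 := inord (v + N.+2).
Definition cp2 N : 'I_(N.+2 + N.+2).+1 := inord (N.+2 + N.+2).

Lemma pr_val N x : nat_of_ord (@pr N x) =
  (if x < N.+2 then (x:nat) else if x < N.+2 + N.+2 then x - N.+2 else N.+1).
Proof.
rewrite /pr inordK //; have := ltn_ord x; case: ifP => _ //; case: ifP; lia.
Qed.

Lemma cp0_val N v : nat_of_ord (@cp0 N v) = v.
Proof. rewrite /cp0 inordK //; have := ltn_ord v; lia. Qed.
Lemma cp1_val N v : nat_of_ord (@cp1 N v) = v + N.+2.
Proof. rewrite /cp1 inordK //; have := ltn_ord v; lia. Qed.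
Lemma cp2_val N : nat_of_ord (@cp2 N) = N.+2 + N.+2.
Proof. by rewrite /cp2 inordK. Qed.

Lemma pr_cp0 N v : pr (@cp0 N v) = v.
Proof. apply: ord_inj; rewrite pr_val cp0_val; have := ltn_ord v; case: ifP; lia. Qed.
Lemma pr_cp1 N v : pr (@cp1 N v) = v.
Proof. apply: ord_inj; rewrite pr_val cp1_val; have := ltn_ord v; case: ifP; try lia; case: ifP; lia. Qed.
Lemma pr_cp2 N : pr (@cp2 N) = ord_max.
Proof. apply: ord_inj; rewrite pr_val cp2_val /=; case: ifP; try lia; case: ifP; lia. Qed.
Lemma cp01 N v : @cp0 N v != cp1 v.
Proof. by rewrite -val_eqE /= cp0_val cp1_val; apply/eqP; lia. Qed.
Lemma cp02 N v : @cp0 N v != cp2 N.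
Proof. by rewrite -val_eqE /= cp0_val cp2_val; apply/eqP; have := ltn_ord v; lia. Qed.
Lemma cp12 N v : @cp1 N v != cp2 N.
Proof. by rewrite -val_eqE /= cp1_val cp2_val; apply/eqP; have := ltn_ord v; lia. Qed.

Lemma contains_sub a n (hh : rel 'I_a) (gg : rel 'I_n) (A B : {set 'I_n}) :
  {subset A <= B} -> contains_in hh gg A -> contains_in hh gg B.
Proof. by move=> sAB [f [fi [fA fe]]]; exists f; split; [|split] => // i; apply: sAB. Qed.

Lemma construct k2 N (g : rel 'I_N.+2) (X' : {set 'I_N.+1}) :
  is_graph g -> Kfree k2.+2 g -> varrows g (Krel k2.+1) (Krel k2.+1) ->
  ~ contains_in (Krel k2.+1) (fun i j : 'I_N.+1 => g (inord i) (inord j)) X' ->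
  ~ contains_in (Krel k2.+1) (fun i j : 'I_N.+1 => g (inord i) (inord j)) (~: X') ->
  Fv_good k2.+2 (Jrel k2.+2) (Jrel k2.+2) (N.+2 + N.+2).+1.
Proof.
move=> [gsym girr] gfree garr bad1 bad2.
pose h (x y : 'I_(N.+2 + N.+2).+1) := g (pr x) (pr y).
exists h; split; [split|split].
- by move=> x y; rewrite /h gsym.
- by move=> x; rewrite /h girr.
- move=> [f [_ [_ fe]]]; apply: gfree.
  have fe' : forall i j, i != j -> g (pr (f i)) (pr (f j)) by move=> i j ij; exact: (fe i j ij).
  exists (fun i => pr (f i)); split; [exact: clique_inj girr fe' | split => //].
  by move=> i; rewrite in_setT.
move=> X.
pose Y := [set v : 'I_N.+2 | if v == ord_max then
   let a := cp0 v \in X in let b := cp1 v \in X in let c := cp2 N \in X in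
   [|| a && b, a && c | b && c]
  else if (cp0 v \in X) == (cp1 v \in X) then cp0 v \in X
  else (inord v : 'I_N.+1) \in X'].
suff key : forall b : bool, contains_in (Krel k2.+1) g [set v | (v \in Y) == b] ->
   contains_in (Jrel k2.+2) h [set x | (x \in X) == b].
  case: (garr Y) => H; [left|right].
  - apply: contains_sub (key true _) => [x|]; first by rewrite inE => /eqP.
    by apply: contains_sub H => v vY; rewrite inE vY.
  - apply: contains_sub (key false _) => [x|]; first by rewrite !inE => /eqP ->.
    by apply: contains_sub H => v; rewrite !inE => /negbTE ->.
move=> b [f [finj [fT fcl]]].
have fT' i : (f i \in Y) == b by have := fT i; rewrite inE.
clear fT.
pose good (v : 'I_N.+2) := (v == ord_max) || ((cp0 v \in X) == (cp1 v \in X)).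
case: (boolP [exists i, good (f i)]) => [/existsP [i0 gi0] | /existsPn nog]; last first.
  exfalso.
  have hf i : (f i != ord_max) && ((cp0 (f i) \in X) != (cp1 (f i) \in X)).
    by have := nog i; rewrite /good negb_or.
  have Yf i : (f i \in Y) = ((inord (f i) : 'I_N.+1) \in X').
    by case/andP: (hf i) => h1 h2; rewrite inE (negbTE h1) (negbTE h2).
  have back i : (inord (nat_of_ord (inord (f i) : 'I_N.+1)) : 'I_N.+2) = f i.
    case/andP: (hf i) => h1 _; move: h1; rewrite -val_eqE /= => h1.
    apply: ord_inj; rewrite !inordK //; have := ltn_ord (f i); lia.
  pose f' i : 'I_N.+1 := inord (f i).
  have e' i j : i != j -> g (inord (f' i)) (inord (f' j)) by rewrite /f' !back; apply: fcl.
  have irr' : irreflexive (fun i j : 'I_N.+1 => g (inord i) (inord j)) by move=> i; apply: girr.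
  have inj' := clique_inj irr' e'.
  case: b fT' => fT'; [apply: bad1 | apply: bad2]; exists f'; (split; [exact: inj'| split => //]).
  - by move=> i; rewrite /f' -Yf; apply/eqP: (fT' i).
  - by move=> i; rewrite inE /f' -Yf; move/eqP: (fT' i) => ->.
have [x0 [x1 [nx [p0 [p1 [S0 S1]]]]]] : exists x0 x1, x0 != x1 /\ pr x0 = f i0 /\
    pr x1 = f i0 /\ (x0 \in X) == b /\ (x1 \in X) == b.
  move: (fT' i0) gi0; clear fT'; rewrite /good inE; case: (eqVneq (f i0) ord_max) => [->|nv] /=.
    move=> Hm _; move: Hm.
    case Ea: (cp0 ord_max \in X); case Eb: (cp1 ord_max \in X); case Ec: (cp2 N \in X);
      case: b => //= _;
      solve [ exists (cp0 ord_max), (cp1 ord_max); rewrite cp01 pr_cp0 pr_cp1 Ea Eb; do !split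
            | exists (cp0 ord_max), (cp2 N); rewrite cp02 pr_cp0 pr_cp2 Ea Ec; do !split
            | exists (cp1 ord_max), (cp2 N); rewrite cp12 pr_cp1 pr_cp2 Eb Ec; do !split ].
  move=> Hy /eqP agree; move: Hy; rewrite agree eqxx => Hy.
  exists (cp0 (f i0)), (cp1 (f i0)); rewrite cp01 pr_cp0 pr_cp1 agree Hy; do !split.
pose sel (v : 'I_N.+2) := if (cp0 v \in X) == b then cp0 v else cp1 v.
have hsel i : pr (sel (f i)) = f i /\ sel (f i) \in [set x | (x \in X) == b].
  rewrite /sel inE; case: ifP => E; first by rewrite pr_cp0 E.
  split; first by rewrite pr_cp1.
  move: (fT' i) E; clear fT' S0 S1 sel; rewrite inE; case: (eqVneq (f i) ord_max) => [->|_].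
    by case: (cp0 ord_max \in X); case: (cp1 ord_max \in X); case: (cp2 N \in X); case: b.
  case: ifP => [/eqP ->|dis _]; first by move=> ->.
  by move: dis; case: (cp0 (f i) \in X); case: (cp1 (f i) \in X); case: b.
apply: (embedJ (g := g) (p := @pr N) (f := f) (i0 := i0) (sel := sel) girr _ _ nx p0 p1) => //.
- by rewrite inE.
- by rewrite inE.
Qed.

Lemma goodb_iff k m1 (h1 : rel 'I_m1) m2 (h2 : rel 'I_m2) n :
  Fv_goodb k h1 h2 n <-> Fv_good k h1 h2 n.
Proof. by rewrite /Fv_goodb; case: excluded_middle_informative. Qed.

Lemma J_to_K k2 m : Fv_good k2.+2 (Jrel k2.+2) (Jrel k2.+2) m ->
  Fv_good k2.+2 (Krel k2.+1) (Krel k2.+1) m.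
Proof.
move=> [g [gg [gf ga]]]; exists g; split => //; split => // X.
have JK A : contains_in (Jrel k2.+2) g A -> contains_in (Krel k2.+1) g A.
  move=> [f [fi [fA fe]]]; exists (fun i => f (lift ord0 i)); split; last split.
  - by move=> i j /fi /lift_inj.
  - by move=> i; apply: fA.
  - move=> i j ij; apply: fe; rewrite /Jrel.
    move: ij; rewrite /Krel -!val_eqE /= /bump /= !add1n => ij.
    by rewrite eqSS ij andbF.
by case: (ga X) => H; [left|right]; apply: JK.
Qed.

Theorem mainTheorem7 (k : nat) (hk : 3 <= k) :
  Fv k (Jrel k) (Jrel k) <= (5 * Fv k (Krel k.-1) (Krel k.-1) + 1) %/ 2.
Proof.
have [k2 ek hk2] : exists2 k2, k = k2.+2 & 1 <= k2 by exists k.-2; lia.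
subst k => /=.
rewrite /Fv.
case: (excluded_middle_informative (exists n, Fv_goodb k2.+2 (Krel k2.+1) (Krel k2.+1) n))
  => [exK|noK]; last first.
  case: excluded_middle_informative => [exJ|] //; exfalso; apply: noK.
  case: exJ => m /goodb_iff Hm; exists m; apply/goodb_iff; exact: J_to_K.
case: (ex_minnP exK) => n /goodb_iff [g [gg [gf ga]]] nmin.
have n2 : 2 <= n.
  by case: (ga setT) => [[f [fi _]]|[f [fi _]]]; have := leq_card _ fi; rewrite !card_ord; lia.
have [N eN] : exists N, n = N.+2 by exists n.-2; lia.
subst n.
pose g' := fun i j : 'I_N.+1 => g (inord i) (inord j).
have notgood : ~ Fv_good k2.+2 (Krel k2.+1) (Krel k2.+1) N.+1.
  move=> /goodb_iff /nmin; lia.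
have [X' [b1 b2]] : exists X' : {set 'I_N.+1},
    ~ contains_in (Krel k2.+1) g' X' /\ ~ contains_in (Krel k2.+1) g' (~: X').
  apply: NNPP => H; apply: notgood; exists g'.
  case: gg => gsym girr.
  split; [split|split].
  - by move=> i j; rewrite /g' gsym.
  - by move=> i; rewrite /g' girr.
  - move=> [f [_ [_ fe]]]; apply: gf.
    have fe' : forall i j, i != j -> g (inord (f i)) (inord (f j)) by move=> i j ij; exact: (fe i j ij).
    exists (fun i => inord (f i)); split; [exact: clique_inj girr fe' | split => //].
    by move=> i; rewrite in_setT.
  - move=> X; apply: NNPP => H2; apply: H; exists X; split => H3; apply: H2; [left|right] => //.
have goodJ := construct gg gf ga b1 b2.
case: excluded_middle_informative => [exJ|_] //.
case: (ex_minnP exJ) => mJ _ Jmin.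
apply: leq_trans (Jmin _ (proj2 (goodb_iff _ _ _ _) goodJ)) _.
lia.
Qed.
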